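(* For every integer $n\ge 2$ there exists a (finite) inverse semigroup $I$ with $\sigma_i(I)=n$.
   Context: An inverse semigroup is a semigroup $I$ such that for every $a\in I$ there is a unique $a^{-1}\in I$ with $aa^{-1}a=a$ and $a^{-1}aa^{-1}=a^{-1}$. An inverse subsemigroup is a subsemigroup closed under $a\mapsto a^{-1}$. $\sigma_i(I)$ is the least positive integer $n$ such that $I$ is the union of $n$ proper inverse subsemigroups, or $\infty$ if no such finite $n$ exists. *)

(* Defs.v *)
From mathcomp Require Import all_boot.
Set Implicit Arguments. Unset Strict Implicit. Unset Printing Implicit Defensive.

Definition is_inverse_semigroup (T : Type) (mul : T -> T -> T) (inv : T -> T) : Prop :=
  (forall a b c, mul a (mul b c) = mul (mul a b) c) /\
  (forall a, mul (mul a (inv a)) a = a /\ mul (mul (inv a) a) (inv a) = inv a) /\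
  (forall a b, mul (mul a b) a = a -> mul (mul b a) b = b -> b = inv a).

Definition is_inverse_subsemigroup (T : finType) (mul : T -> T -> T) (inv : T -> T)
    (S : {set T}) : Prop :=
  (forall a b, a \in S -> b \in S -> mul a b \in S) /\
  (forall a, a \in S -> inv a \in S).

Definition inv_coverable (T : finType) (mul : T -> T -> T) (inv : T -> T) (n : nat) : Prop :=
  exists F : 'I_n -> {set T},
    (forall i, F i \proper [set: T] /\ is_inverse_subsemigroup mul inv (F i)) /\
    (forall x : T, exists i, x \in F i).

Definition sigma_i_eq (T : finType) (mul : T -> T -> T) (inv : T -> T) (n : nat) : Prop :=
  0 < n /\ inv_coverable mul inv n /\
  (forall m, 0 < m -> m < n -> ~ inv_coverable mul inv m).

(* Main.v *)
Require Import Defs.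
From mathcomp Require Import all_boot all_fingroup all_solvable zmodp zify.
Set Implicit Arguments. Unset Strict Implicit. Unset Printing Implicit Defensive.
Import GroupScope.

Section B2.
Variable gT : finGroupType.
Definition B2T : finType := option ((bool * gT) * bool)%type.
Definition bmul (x y : B2T) : B2T :=
  match x, y with
  | Some (i, g, j), Some (k, h, l) => if j == k then Some (i, g * h, l) else None
  | _, _ => None
  end.
Definition binv (x : B2T) : B2T :=
  match x with Some (i, g, j) => Some (j, g^-1, i) | None => None end.

Lemma ghg (g h : gT) : g * h * g = g -> h = g^-1.
Proof. by move=> E; apply: (mulgI g); rewrite mulgV; apply: (mulIg g); rewrite mul1g. Qed.

Lemma B2_inv : is_inverse_semigroup bmul binv.
Proof.
split; [|split].
- move=> [[[i g] j]|] [[[k h] l]|] [[[p q] r]|] //=.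
  + by case: j; case: k; case: l; case: p; rewrite /= ?mulgA.
  + by case: (j == k).
- move=> [[[i g] j]|] //=; by case: i; case: j; rewrite /= mulgV mulVg !mul1g.
- move=> [[[i g] j]|] [[[k h] l]|] //=;
  case: i; case: j; case: k; case: l => //= E1 E2; try discriminate;
  case: E1 => /ghg ->; by [].
Qed.
End B2.

Section Upper.
Variable gT : finGroupType.
Variable K0 : {group gT}.
Variable m : nat.
Hypothesis hm : 2 <= m.
Hypothesis hK0 : #|[set: gT] : K0| = m.

Definition wt (x : gT) (b : bool) := if b then 1 else x.
Definition Sx (x : gT) : {set B2T gT} :=
  [set z : B2T gT | match z with None => true
                     | Some (i, g, j) => wt x i * g * (wt x j)^-1 \in K0 end].
Definition Dg : {set B2T gT} :=
  [set z : B2T gT | match z with None => true | Some (i, g, j) => i == j end].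

Lemma K0_ne : exists g, g \notin K0.
Proof.
apply/existsP; rewrite -negb_forall; apply/negP => /forallP all.
have: [set: gT] \subset K0 by apply/subsetP => g _; apply: all.
by rewrite -indexg_eq1 hK0; case: m hm => [|[]].
Qed.

Lemma Sx_ok x : Sx x \proper [set: B2T gT] /\ is_inverse_subsemigroup (@bmul gT) (@binv gT) (Sx x).
Proof.
split; [|split].
- rewrite properT; have [g hg] := K0_ne; apply/eqP => E.
  have : (Some (true, g, true) : B2T gT) \in Sx x by rewrite E inE.
  by rewrite inE /= invg1 mulg1 mul1g (negPf hg).
- move=> [[[i g] j]|] [[[k h] l]|]; rewrite ?inE //= => a b.
  case: (eqVneq j k) => [E|_] //; subst k.
  by have := groupM a b; rewrite !mulgA mulgKV.
- move=> [[[i g] j]|]; rewrite !inE //= => a.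
  by rewrite -groupV !invMg !invgK mulgA.
Qed.

Lemma Dg_ok : Dg \proper [set: B2T gT] /\ is_inverse_subsemigroup (@bmul gT) (@binv gT) Dg.
Proof.
split; [|split].
- rewrite properT; apply/eqP => E.
  have : (Some (true, 1, false) : B2T gT) \in Dg by rewrite E inE.
  by rewrite inE.
- move=> [[[i g] j]|] [[[k h] l]|]; rewrite ?inE //= => /eqP <- /eqP <-.
  by case: i; case: k.
- by move=> [[[i g] j]|]; rewrite !inE //= eq_sym.
Qed.

Definition cs := enum (rcosets K0 [set: gT]).
Lemma size_cs : size cs = m.
Proof. by rewrite /cs -cardE. Qed.

Definition Fup (i : 'I_m.+1) : {set B2T gT} :=
  if i < m then Sx (repr (nth set0 cs i)) else Dg.

Lemma cover_coset (g : gT) : exists i : 'I_m.+1, (i < m) && (g * (repr (nth set0 cs i))^-1 \in K0).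
Proof.
have Cin : K0 :* g \in cs by rewrite /cs mem_enum mem_rcosets -[g]mul1g mem_mulg ?group1 ?inE.
have hi : index (K0 :* g) cs < m.+1 by rewrite ltnS -size_cs ltnW // index_mem.
exists (Ordinal hi) => /=; rewrite -size_cs index_mem Cin /= nth_index //.
rewrite -mem_rcoset; apply/rcoset_eqP.
by have := mem_repr_rcoset K0 g => /rcoset_eqP ->.
Qed.

Lemma upper : inv_coverable (@bmul gT) (@binv gT) m.+1.
Proof.
exists Fup; split.
- move=> i; rewrite /Fup; case: (i < m); [exact: Sx_ok | exact: Dg_ok].
- move=> [[[i g] j]|]; last by exists ord_max; rewrite /Fup /= ltnn inE.
  case: (eqVneq i j) => [<-|ne].
    by exists ord_max; rewrite /Fup /= ltnn inE.
  case: i ne => [] ne; [have [k /andP[km hk]] := cover_coset g | have [k /andP[km hk]] := cover_coset g^-1];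
  exists k; rewrite /Fup km inE; case: j ne => // _ /=.
  + by rewrite mul1g.
  + by rewrite invg1 mulg1 -groupV invMg.
Qed.
End Upper.

Lemma card_bigcup_le (T : finType) k (A : 'I_k -> {set T}) :
  #|\bigcup_(i < k) A i| <= \sum_(i < k) #|A i|.
Proof.
elim/big_ind2: _ => //; first by rewrite cards0.
move=> x1 y1 x2 y2 h1 h2; rewrite cardsU.
exact: leq_trans (leq_subr _ _) (leq_add h1 h2).
Qed.

Section Lower.
Variable gT : finGroupType.
Variable m : nat.
Hypothesis hm : 2 <= m.
Hypothesis hsub : forall K : {group gT}, K \proper [set: gT] -> m * #|K| <= #|gT|.

Definition Pset (S : {set B2T gT}) := [set g | (Some (true, g, false) : B2T gT) \in S].
Definition Qset (S : {set B2T gT}) := [set g | (Some (true, g, true) : B2T gT) \in S].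

Lemma struct (S : {set B2T gT}) :
  S \proper [set: B2T gT] -> is_inverse_subsemigroup (@bmul gT) (@binv gT) S ->
  Pset S != set0 -> #|Pset S| = #|Qset S| /\ 1 \in Qset S /\ m * #|Qset S| <= #|gT|.
Proof.
move=> Spr [Smul Sinv] /set0Pn [g0]; rewrite inE => Pg0.
have Ig0 : (Some (false, g0^-1, true) : B2T gT) \in S by exact: (Sinv _ Pg0).
have Q1 : 1 \in Qset S by rewrite inE -(mulgV g0); exact: (Smul _ _ Pg0 Ig0).
have Qgs : group_set (Qset S).
  apply/group_setP; split => // x y; rewrite !inE => hx hy; exact: (Smul _ _ hx hy).
pose QG := Group Qgs.
have PQ : Pset S = Qset S :* g0.
  apply/setP => g; rewrite mem_rcoset !inE; apply/idP/idP => h.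
  - exact: (Smul _ _ h Ig0).
  - by have := Smul _ _ h Pg0; rewrite /= mulgKV.
split; first by rewrite PQ card_rcoset.
split => //.
apply: (hsub (K := QG)); rewrite properT; apply/eqP => QT.
move: Spr; rewrite properT => /eqP; apply; apply/setP => z; rewrite inE.
have Qall g : (Some (true, g, true) : B2T gT) \in S.
  have : g \in QG by rewrite QT inE. by rewrite inE.
have Pall g : (Some (true, g, false) : B2T gT) \in S.
  by have := Smul _ _ (Qall (g * g0^-1)) Pg0; rewrite /= mulgKV.
case: z => [[[[] g] []]|].
- exact: Qall.
- exact: Pall.
- by have := Sinv _ (Pall g^-1); rewrite /= invgK.
- by have := Smul _ _ (Sinv _ (Pall g^-1)) (Pall 1); rewrite /= invgK mulg1.
- exact: (Smul _ _ Pg0 Pg0).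
Qed.

Lemma lower k : 0 < k -> k <= m -> ~ inv_coverable (@bmul gT) (@binv gT) k.
Proof.
move=> k0 km [F [Fok Fcov]].
pose P i := Pset (F i). pose Q i := Qset (F i).
have N0 : 0 < #|gT| by apply/card_gt0P; exists 1.
have covP : #|gT| <= \sum_(i < k) #|P i|.
  rewrite -cardsT; apply: leq_trans (card_bigcup_le P); apply: subset_leq_card.
  apply/subsetP => g _; have [i hi] := Fcov (Some (true, g, false)).
  by apply/bigcupP; exists i => //; rewrite inE.
have covQ : #|gT| <= (\sum_(i < k) #|Q i :\ (1%g : gT)|).+1.
  rewrite -cardsT (cardsD1 (1%g : gT)) inE add1n ltnS.
  apply: leq_trans (card_bigcup_le (fun i => Q i :\ (1%g : gT))); apply: subset_leq_card.
  apply/subsetP => g; rewrite !inE => /andP [ne _]; have [i hi] := Fcov (Some (true, g, true)).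
  by apply/bigcupP; exists i => //; rewrite !inE ne.
case: (pickP (fun i => P i == set0)) => [i0 /eqP P0 | allne].
- have : \sum_(i < k) m * #|P i| <= (k.-1) * #|gT|.
    rewrite (bigD1 i0) //= P0 cards0 muln0 add0n.
    apply: (@leq_trans (\sum_(i < k | i != i0) #|gT|)).
      apply: leq_sum => i _; case: (eqVneq (P i) set0) => [->|ne]; first by rewrite cards0 muln0.
      by have [e [_ mq]] := struct (Fok i).1 (Fok i).2 ne; rewrite /P e.
    by rewrite sum_nat_const cardC1 card_ord.
  rewrite -big_distrr /= => h.
  have : m * #|gT| <= m * \sum_(i < k) #|P i| by rewrite leq_mul2l covP orbT.
  move=> h2; have h3 : k.-1 * #|gT| < m * #|gT| by rewrite ltn_pmul2r //; lia.
  by have := leq_ltn_trans (leq_trans h2 h) h3; rewrite ltnn.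
- have hb i : m * (#|P i| + #|Q i :\ (1%g : gT)|) + m <= 2 * #|gT|.
    have ne : P i != set0 by rewrite allne.
    have [e [one mq]] := struct (Fok i).1 (Fok i).2 ne.
    rewrite /P e; move: mq; rewrite (cardsD1 (1%g : gT) (Q i)) one add1n /Q; nia.
  have : \sum_(i < k) (m * (#|P i| + #|Q i :\ (1%g : gT)|) + m) <= \sum_(i < k) 2 * #|gT|.
    by apply: leq_sum => i _; exact: hb.
  rewrite big_split /= sum_nat_const card_ord -big_distrr /= big_split /= sum_nat_const card_ord.
  move: covP covQ; set A := \sum_(i < k) _; set B := \sum_(i < k) _ => covP covQ h.
  have h1 : m * (2 * #|gT|) <= m * (A + B) + m.
    rewrite -mulnSr leq_mul2l; apply/orP; right; lia.
  have h2 : k * (2 * #|gT|) <= m * (2 * #|gT|) by rewrite leq_mul2r km orbT.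
  have h4 : k * m <= 1 * m.
    by have := leq_trans h (leq_trans h2 h1); rewrite leq_add2l mul1n.
  have k1 : k = 1%N by move: h4; rewrite leq_mul2r; lia.
  subst k; rewrite !mul1n in h; have := leq_trans h1 h; rewrite -{2}[(2 * #|gT|)%N]mul1n leq_mul2r.
  case/orP; lia.
Qed.
End Lower.

Lemma simple_index (gT : finGroupType) (G H : {group gT}) :
  simple G -> H \subset G -> H :!=: G -> #|G| <= (#|G : H|)`!.
Proof.
move=> /simpleP [_ sG] sHG neHG.
have nRA := actsRs_rcosets H G.
have ff : [faithful G, on rcosets H G | 'Rs].
  rewrite /faithful astabRs_rcosets.
  have [->|E] := sG _ (gcore_normal sHG); first by rewrite setIg1 subxx.
  by move: (gcore_sub H G); rewrite E => sGH; case/negP: neHG; rewrite eqEsubset sHG sGH.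
rewrite (isom_card (faithful_isom nRA ff)) -card_perm.
apply: subset_leq_card; apply/subsetP => p /morphimP [a _ Ga ->].
rewrite unfold_in; apply/subsetP => x; rewrite inE /= actpermE /= /actby Ga andbT.
by case: (x \in rcosets H G) => //; rewrite eqxx.
Qed.

Lemma fact_mono a b : a <= b -> a`! <= b`!.
Proof.
move=> /subnK <-; elim: (b - a) => [|n IH]; first by rewrite add0n.
by rewrite addSn factS; apply: leq_trans IH _; rewrite leq_pmull.
Qed.

Section AltHyps.
Local Open Scope nat_scope.
Variable m : nat.
Hypothesis hm : 4 < m.
Definition AG := 'Alt_('I_m).
Definition gA := subg_of AG.

Lemma card_gA : #|gA| = #|AG|.
Proof. by rewrite -cardsT (card_isog (isog_subg AG)). Qed.

Lemma card_AG2 : 2 * #|AG| = m`!.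
Proof. by rewrite /AG card_Alt card_ord //; lia. Qed.

Lemma simple_gA : simple [set: gA].
Proof. by rewrite -(isog_simple (isog_subg AG)); apply: simple_Alt5; rewrite card_ord; lia. Qed.

Lemma hsub_gA (K : {group gA}) : K \proper [set: gA] -> m * #|K| <= #|gA|.
Proof.
rewrite properT => neK.
have sK : K \subset [set: gA] := subsetT K.
have hi := simple_index simple_gA sK neK.
have L := Lagrange sK; rewrite cardsT in L.
have idx : m <= #|[set: gA] : K|.
  rewrite leqNgt; apply/negP => lt.
  have : #|gA| <= m.-1`!.
    by rewrite -cardsT; apply: leq_trans hi (fact_mono _); rewrite -ltnS prednK //; lia.
  have : m`! = m * m.-1`! by rewrite -{1}(prednK (_ : 0 < m)) ?factS //; lia.
  have := card_AG2; rewrite -card_gA => e1 e2 h.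
  have : 2 * m.-1`! < m * m.-1`! by rewrite ltn_pmul2r ?fact_gt0 //; lia.
  lia.
by rewrite -L mulnC leq_mul2l idx orbT.
Qed.

Lemma hK0_gA : exists K0 : {group gA}, #|[set: gA] : K0| = m.
Proof.
have x : 'I_m by exists 0; lia.
pose St := 'C_AG[x | 'P].
have tr : [transitive AG, on [set: 'I_m] | 'P].
  by apply: (ntransitive1 (m := #|'I_m|.-2)); [rewrite card_ord; lia | exact: Alt_trans].
have orb : #|orbit 'P AG x| = m by rewrite (atransP tr) ?inE // cardsT card_ord.
have cs := card_orbit_stab 'P AG x; rewrite orb in cs.
have sSt : St \subset AG by rewrite subsetIl.
exists (subg AG @* St)%G.
have L := Lagrange (subsetT (subg AG @* St)%G).
rewrite cardsT card_gA (card_injm (injm_subg AG) sSt) -cs in L.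
move: L; rewrite [in RHS]mulnC => /eqP; rewrite (eqn_pmul2l (cardG_gt0 [group of St])) => /eqP.
exact.
Qed.
End AltHyps.

Section Gen.
Variables (T : finType) (mul : T -> T -> T) (inv : T -> T).
Definition clL (l : seq T) : seq T :=
  undup (l ++ [seq mul a b | a <- l, b <- l] ++ map inv l).
Lemma clL_sub (S : {set T}) l : is_inverse_subsemigroup mul inv S -> all (mem S) l -> all (mem S) (clL l).
Proof.
move=> [Sm Si] /allP lS; apply/allP => z; rewrite mem_undup !mem_cat => /or3P [zl|/allpairsP[[a b] [al bl ->]]|/mapP[a al ->]].
- exact: lS.
- by apply: Sm; [apply: lS | apply: lS].
- by apply: Si; apply: lS.
Qed.
Lemma iter_clL_sub n (S : {set T}) l : is_inverse_subsemigroup mul inv S -> all (mem S) l -> all (mem S) (iter n clL l).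
Proof. by move=> hS lS; elim: n => //= n IH; apply: clL_sub. Qed.

Variable elems : seq T.
Hypothesis mem_elems : forall a, a \in elems.

Definition gen2 (x y : T) := all (fun z => z \in iter 3 clL [:: x; y]) elems.

Lemma gen2_full (S : {set T}) x y : is_inverse_subsemigroup mul inv S -> x \in S -> y \in S -> gen2 x y -> S = setT.
Proof.
move=> hS xS yS /allP E; apply/setP => z; rewrite inE.
have hl : all (mem S) [:: x; y] by rewrite /= xS yS.
have /allP h := iter_clL_sub 3 hS hl.
exact: (h z (E z (mem_elems z))).
Qed.
End Gen.

Definition A4 : finType := ((bool * bool) * 'I_3)%type.
Definition phi (v : bool * bool) : bool * bool := (v.2, v.1 (+) v.2).
Definition addv (v w : bool * bool) : bool * bool := (v.1 (+) w.1, v.2 (+) w.2).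
Definition o3 (n : nat) : 'I_3 := Ordinal (ltn_pmod n (isT : 0 < 3)).
Definition a4mul (p q : A4) : A4 :=
  let: (v, a) := p in let: (w, b) := q in (addv v (iter a phi w), o3 (a + b)).
Definition a4inv (p : A4) : A4 :=
  let: (v, a) := p in (iter (3 - a) phi v, o3 (3 - a)).
Definition a4el : seq A4 :=
  [seq (v, k) | v <- [:: (true, true); (true, false); (false, true); (false, false)], k <- [:: o3 0; o3 1; o3 2]].
Lemma mem_a4el a : a \in a4el.
Proof.
case: a => [[x y] [k hk]]; case: x; case: y; move: hk; case: k => [|[|[|k]]] hk //; vm_compute; reflexivity.
Qed.

Lemma allA4 (P : pred A4) : all P a4el -> forall a, P a.
Proof. by move=> /allP h a; apply: h; apply: mem_a4el. Qed.

Lemma a4assoc : all (fun a => all (fun b => all (fun c => a4mul a (a4mul b c) == a4mul (a4mul a b) c) a4el) a4el) a4el.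
Proof. by vm_compute. Qed.
Lemma a4reg : all (fun a => (a4mul (a4mul a (a4inv a)) a == a) && (a4mul (a4mul (a4inv a) a) (a4inv a) == a4inv a)) a4el.
Proof. by vm_compute. Qed.
Lemma a4uniq : all (fun a => all (fun b => (a4mul (a4mul a b) a == a) ==> (a4mul (a4mul b a) b == b) ==> (b == a4inv a)) a4el) a4el.
Proof. by vm_compute. Qed.

Lemma A4_inv : is_inverse_semigroup a4mul a4inv.
Proof.
split; [|split].
- move=> a b c; apply/eqP; move: c; apply: allA4; move: b; apply: allA4; move: a; apply: allA4.
  exact: a4assoc.
- move=> a; have /andP[/eqP -> /eqP ->] := allA4 a4reg a; done.
- move=> a b h1 h2; have := allA4 (allA4 a4uniq a) b.
  by move/implyP/(_ (introT eqP h1))/implyP/(_ (introT eqP h2))/eqP.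
Qed.

Definition vs : seq (bool * bool) := [:: (true, true); (true, false); (false, true); (false, false)].
Definition gn (i : nat) : A4 := (nth (false, false) vs i, o3 1).
Definition pc (i : nat) (z : A4) : bool :=
  if i < 4 then z \in iter 2 (clL a4mul a4inv) [:: gn i] else z.2 == o3 0.
Definition ob (j : nat) : A4 := if j < 4 then gn j else ((true, false), o3 0).

Lemma pc_closed : all (fun i => all (fun a => all (fun b => pc i a ==> pc i b ==> pc i (a4mul a b)) a4el) a4el) (iota 0 5).
Proof. by vm_compute. Qed.
Lemma pc_inv : all (fun i => all (fun a => pc i a ==> pc i (a4inv a)) a4el) (iota 0 5).
Proof. by vm_compute. Qed.
Lemma pc_proper : all (fun i => ~~ all (pc i) a4el) (iota 0 5).
Proof. by vm_compute. Qed.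
Lemma pc_cover : all (fun z => has (fun i => pc i z) (iota 0 5)) a4el.
Proof. by vm_compute. Qed.
Lemma ob_gen : all (fun j => all (fun k => (j == k) || gen2 a4mul a4inv a4el (ob j) (ob k)) (iota 0 5)) (iota 0 5).
Proof. by vm_compute. Qed.

Lemma in_iota5 (i : 'I_5) : (i : nat) \in iota 0 5.
Proof. by rewrite mem_iota ltn_ord. Qed.

Lemma A4_sigma : sigma_i_eq a4mul a4inv 5.
Proof.
split => //; split.
- exists (fun i : 'I_5 => [set z | pc i z]); split.
  + move=> i; split.
    * rewrite properT; apply/negP => /eqP E.
      have /negP := allP pc_proper i (in_iota5 i); apply; apply/allP => z _.
      have : z \in [set z | pc i z] by rewrite E inE.
      by rewrite inE.
    * split.
      -- move=> a b; rewrite !inE => ha hb.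
         have := allA4 (allA4 (allP pc_closed i (in_iota5 i)) a) b.
         by rewrite ha hb.
      -- move=> a; rewrite !inE => ha.
         by have := allA4 (allP pc_inv i (in_iota5 i)) a; rewrite ha.
  + move=> z; have /hasP [i hi pz] := allA4 pc_cover z.
    move: hi; rewrite mem_iota add0n => /andP [_ hi].
    by exists (Ordinal hi); rewrite inE.
- move=> m m0 m5 [F [Fok Fcov]].
  pose i0 : 'I_m := Ordinal m0.
  pose c (j : 'I_5) : 'I_m := odflt i0 [pick i | ob j \in F i].
  have cP (j : 'I_5) : ob j \in F (c j).
    rewrite /c; case: pickP => [i //|none]; have [i hi] := Fcov (ob j).
    by have := none i; rewrite hi.
  have : ~~ injectiveb c.
    apply/injectiveP => inj; have := leq_card c inj; rewrite !card_ord; lia.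
  move=> /injectivePn [j [j' ne e]].
  have g : gen2 a4mul a4inv a4el (ob j) (ob j').
    have ne' : (j : nat) != j' := ne.
    by have := allP (allP ob_gen j (in_iota5 j)) j' (in_iota5 j'); rewrite (negPf ne').
  have cj' := cP j'; rewrite -e in cj'.
  have E := gen2_full mem_a4el (Fok (c j)).2 (cP j) cj' g.
  by move: (Fok (c j)).1; rewrite E properT eqxx.
Qed.

Lemma B2_sigma (gT : finGroupType) (m : nat) : 2 <= m ->
  (forall K : {group gT}, K \proper [set: gT] -> (m * #|K| <= #|gT|)%N) ->
  (exists K0 : {group gT}, #|[set: gT] : K0| = m) ->
  sigma_i_eq (@bmul gT) (@binv gT) m.+1.
Proof.
move=> hm hs [K0 hK0]; split => //; split; first exact: upper hK0.
move=> k k0 km; apply: (lower hm hs k0); by rewrite -ltnS.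
Qed.

Lemma prime_hyps (gT : finGroupType) (p : nat) : prime p -> #|gT| = p ->
  (forall K : {group gT}, K \proper [set: gT] -> (p * #|K| <= #|gT|)%N) /\
  (exists K0 : {group gT}, #|[set: gT] : K0| = p).
Proof.
move=> pp cg; split.
- move=> K; rewrite properT => neK.
  have := cardSg (subsetT K); rewrite cardsT cg.
  case/primeP: pp => _ h /h /orP [/eqP ->|/eqP e]; first by rewrite muln1 -[p]cg.
  case/negP: neK; rewrite eqEcard subsetT cardsT cg e /=; by [].
- exists 1%G; have := Lagrange (sub1G [set: gT]); rewrite cards1 mul1n cardsT cg.
  by [].
Qed.

Lemma bool_sigma : sigma_i_eq andb (@id bool) 2.
Proof.
split => //; split.
- exists (fun i : 'I_2 => [set odd i]); split.
  + move=> i; split.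
    * rewrite properT; apply/negP => /eqP E.
      have := in_setT (~~ odd i); rewrite -E inE; by case: (odd i).
    * split; first by move=> a b; rewrite !inE => /eqP -> /eqP ->; rewrite andbb.
      by move=> a.
  + move=> x; case: x.
    * by exists (Ordinal (isT : 1 < 2)); rewrite inE.
    * by exists (Ordinal (isT : 0 < 2)); rewrite inE.
- move=> [|[|m]] //= _ _ [F [Fok Fcov]].
  have i0 : forall i : 'I_1, i = ord0 by move=> [[|]] // ?; apply: val_inj.
  have := (Fok ord0).1; rewrite properT => /negP; apply; apply/eqP/setP => x.
  rewrite inE; have [i hi] := Fcov x; by rewrite -(i0 i).
Qed.

Close Scope group_scope.

Theorem mainTheorem3 (n : nat) (hn : 2 <= n) :
  exists (T : finType) (mul : T -> T -> T) (inv : T -> T),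
    is_inverse_semigroup mul inv /\ sigma_i_eq mul inv n.
Proof.
case: n hn => [|[|[|[|[|[|n]]]]]] // _.
- by exists (bool : finType), andb, id; split; [split; [|split] => //; [case; case; case | case | case; case] | exact: bool_sigma].
- have [hs hk] := @prime_hyps ('I_2 : finGroupType) 2 isT (card_ord 2).
  by exists (B2T ('I_2 : finGroupType)), (@bmul _), (@binv _); split; [exact: B2_inv | exact: B2_sigma].
- have [hs hk] := @prime_hyps ('I_3 : finGroupType) 3 isT (card_ord 3).
  by exists (B2T ('I_3 : finGroupType)), (@bmul _), (@binv _); split; [exact: B2_inv | exact: B2_sigma].
- by exists A4, a4mul, a4inv; split; [exact: A4_inv | exact: A4_sigma].
- have hm : 4 < n.+4.+1 by [].
  exists (B2T (gA n.+4.+1)), (@bmul _), (@binv _); split; first exact: B2_inv.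
  by apply: B2_sigma => //; [exact: hsub_gA | exact: hK0_gA].
Qed.
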